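(* Let $(S_n)_{n\ge1}$ be a sequence in $\mathcal S$ satisfying infill asymptotics with respect to $(S^*_m)_{m=1}^M$, let $(a_t)_{t\ge1}$ be positive with $a_t\to0$, and let $(k_N)_{N\ge1}$ be the adaptive number-of-neighbors sequence. Then (1) $\lim_{N\to\infty}k_N=\infty$, and (2) $\lim_{N\to\infty}R_{N,k_N}=0$.
   Context: $(\mathcal S,d)$ is a metric space and $S^*_1,\dots,S^*_M\in\mathcal S$ are fixed target locations. Infill asymptotics: for every $m$ and every open $U\ni S^*_m$, infinitely many $n$ satisfy $S_n\in U$. For $t\le N$, $R_{N,t}=\max_{1\le m\le M}\max\{d(S^*_m,S_n):n\le N,\ S_n \text{ is among the } t \text{ nearest neighbors of } S^*_m \text{ in } \{S_1,\dots,S_N\}\}$ (ties broken uniformly at random). Adaptive sequence: $k_1=1$ and $k_{N+1}=k_N+1$ if $R_{N+1,k_N+1}\le a_{k_N}$, otherwise $k_{N+1}=k_N$. *)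

(* Defs.v *)
From HB Require Import structures.
From mathcomp Require Import all_boot all_order all_algebra.
From mathcomp Require Import reals.
Set Implicit Arguments. Unset Strict Implicit. Unset Printing Implicit Defensive.
Import Order.TTheory GRing.Theory Num.Theory.
Local Open Scope ring_scope.

Definition is_metric (R : realType) (T : Type) (d : T -> T -> R) : Prop :=
  (forall x y, 0 <= d x y) /\
  (forall x y, d x y = 0 <-> x = y) /\
  (forall x y, d x y = d y x) /\
  (forall x y z, d x z <= d x y + d y z).

Definition metric_open (R : realType) (T : Type) (d : T -> T -> R) (U : T -> Prop) : Prop :=
  forall x, U x -> exists2 e : R, 0 < e & forall y, d x y < e -> U y.

Definition infill (R : realType) (T : Type) (d : T -> T -> R)
  (S : nat -> T) (Sstar : nat -> T) (M : nat) : Prop :=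
  forall m, (1 <= m <= M)%N -> forall U : T -> Prop, metric_open d U -> U (Sstar m) ->
    forall n0 : nat, exists n : nat, (n0 < n)%N /\ U (S n).

(* l (a list of indices) is a valid set of t nearest neighbours of x among
   S_1, ..., S_N (for some tie-breaking): t distinct indices in [1, N], each
   at least as close to x as every index in [1, N] not chosen. *)
Definition is_nn_set (R : realType) (T : Type) (d : T -> T -> R) (x : T)
  (S : nat -> T) (N t : nat) (l : seq nat) : Prop :=
  [/\ uniq l, size l = t, all (fun i => (1 <= i <= N)%N) l &
      forall i j, i \in l -> (1 <= j <= N)%N -> j \notin l -> d x (S i) <= d x (S j)].

(* R_{N,t} given the realised nearest-neighbour sets sel m N t (the t nearest
   neighbours of S*_m among S_1..S_N, ties broken by the realisation sel). *)
Definition RNt (R : realType) (T : Type) (d : T -> T -> R)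
  (S Sstar : nat -> T) (M : nat) (sel : nat -> nat -> nat -> seq nat) (N t : nat) : R :=
  \big[Num.max/0]_(m <- iota 1 M) \big[Num.max/0]_(i <- sel m N t) d (Sstar m) (S i).

(* Main.v *)
Require Import Defs.
From HB Require Import structures.
From mathcomp Require Import all_boot all_order all_algebra.
From mathcomp Require Import reals.
From mathcomp Require Import lra zify.
From Stdlib Require Import Classical.
Import Order.TTheory GRing.Theory Num.Theory.
Local Open Scope ring_scope.

Lemma bigmax_ge {R : realType} {s : seq nat} (F : nat -> R) {j} :
  j \in s -> F j <= \big[Num.max/0]_(i <- s) F i.
Proof.
elim: s => //= x s IH; rewrite inE big_cons => /orP[/eqP->|/IH h].
  by rewrite le_max lexx.
by rewrite le_max h orbT.
Qed.

Lemma bigmax_le (R : realType) (s : seq nat) (F : nat -> R) r :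
  0 <= r -> (forall i, i \in s -> F i <= r) -> \big[Num.max/0]_(i <- s) F i <= r.
Proof.
move=> r0; elim: s => [|x s IH] H; first by rewrite big_nil.
rewrite big_cons ge_max H ?mem_head //= IH // => i ii.
by apply: H; rewrite inE ii orbT.
Qed.

Lemma bigmax_lt (R : realType) (s : seq nat) (F : nat -> R) r :
  0 < r -> (forall i, i \in s -> F i < r) -> \big[Num.max/0]_(i <- s) F i < r.
Proof.
move=> r0; elim: s => [|x s IH] H; first by rewrite big_nil.
rewrite big_cons gt_max H ?mem_head //= IH // => i ii.
by apply: H; rewrite inE ii orbT.
Qed.

Lemma bigmax_ge0 (R : realType) (s : seq nat) (F : nat -> R) :
  0 <= \big[Num.max/0]_(i <- s) F i.
Proof.
elim: s => [|x s IH]; first by rewrite big_nil.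
by rewrite big_cons le_max IH orbT.
Qed.

Lemma nn_cmp {R : realType} {T : Type} {d : T -> T -> R} {x S N t l l'} :
  is_nn_set d x S N t l' -> uniq l -> size l = t ->
  all (fun i => (1 <= i <= N)%N) l ->
  forall i, i \in l' -> exists2 j, j \in l & d x (S i) <= d x (S j).
Proof.
case=> ul' sl' al' H ul sl al i il'.
have [sub|nsub] := boolP (all (fun j => j \in l') l).
  have [_ eq] := uniq_min_size ul (fun y yl => allP sub y yl) (eq_leq (etrans sl' (esym sl))).
  by exists i; [rewrite eq | exact: lexx].
move/allPn: nsub => [j jl jn]; exists j => //.
by apply: H => //; exact: (allP al j jl).
Qed.

Theorem propositionD2 (R : realType) (T : Type) (d : T -> T -> R)
  (M : nat) (Sstar S : nat -> T) (a : nat -> R) (k : nat -> nat)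
  (sel : nat -> nat -> nat -> seq nat) :
  is_metric d ->
  infill d S Sstar M ->
  (forall t, (1 <= t)%N -> 0 < a t) ->
  (forall e : R, 0 < e -> exists t0 : nat, forall t, (t0 <= t)%N -> a t < e) ->
  (forall m N t, (1 <= m <= M)%N -> (1 <= t <= N)%N ->
     is_nn_set d (Sstar m) S N t (sel m N t)) ->
  k 1%N = 1%N ->
  (forall N, (1 <= N)%N ->
     k N.+1 = if RNt d S Sstar M sel N.+1 (k N).+1 <= a (k N) then (k N).+1 else k N) ->
  (forall K : nat, exists N0 : nat, forall N, (N0 <= N)%N -> (K <= k N)%N) /\
  (forall e : R, 0 < e -> exists N0 : nat, forall N, (N0 <= N)%N ->
     RNt d S Sstar M sel N (k N) < e).
Proof.
move=> [dge0 [deq [dsym dtri]]] hinf apos alim hsel hk1 hstep.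
have hkle : forall N, (1 <= N)%N -> (1 <= k N <= N)%N.
  elim=> // N IH _; case: N IH => [|N] IH; first by rewrite hk1.
  have /andP[h1 h2] := IH isT; rewrite (hstep N.+1) //; case: ifP => _; apply/andP; split; lia.
have hkmono1 : forall N, (1 <= N)%N -> (k N <= k N.+1)%N.
  by move=> N hN; rewrite hstep //; case: ifP.
have hkmono : forall N N', (1 <= N)%N -> (N <= N')%N -> (k N <= k N')%N.
  move=> N N' hN; elim: N' => [|N' IH]; first by rewrite leqn0 => /eqP ->.
  rewrite leq_eqVlt => /orP[/eqP->//|]; rewrite ltnS => h.
  apply: leq_trans (IH h) _; apply: hkmono1; exact: leq_trans hN h.
have hmon : forall t N N', (1 <= t <= N)%N -> (N <= N')%N ->
    RNt d S Sstar M sel N' t <= RNt d S Sstar M sel N t.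
  move=> t N N' htN hNN'; rewrite /RNt.
  apply: bigmax_le; first exact: bigmax_ge0.
  move=> m; rewrite mem_iota => /andP[m1 m2]; rewrite add1n ltnS in m2.
  have hm : (1 <= m <= M)%N by rewrite m1 m2.
  apply: bigmax_le; first exact: bigmax_ge0.
  move=> i ii.
  have htN' : (1 <= t <= N')%N.
    by case/andP: htN => h1 h2; rewrite h1 (leq_trans h2 hNN').
  have hl := hsel m N t hm htN.
  case: (hl) => ul sl al _.
  have al2 : all (fun i => (1 <= i <= N')%N) (sel m N t).
    apply/allP => j jl; case/andP: (allP al j jl) => -> h /=; exact: leq_trans h hNN'.
  have [j jl hj] := nn_cmp (hsel m N' t hm htN') ul sl al2 _ ii.
  apply: le_trans hj _; apply: le_trans (bigmax_ge (fun i => d (Sstar m) (S i)) jl) _.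
  by apply: (bigmax_ge (fun m => \big[Num.max/0]_(i <- sel m N t) d (Sstar m) (S i))); rewrite mem_iota add1n ltnS m1 m2.
have hclose : forall m r, (1 <= m <= M)%N -> 0 < r -> forall t, exists B l,
    [/\ uniq l, size l = t, all (fun i => (1 <= i <= B)%N) l &
        forall i, i \in l -> d (Sstar m) (S i) < r].
  move=> m r hm r0; elim=> [|t [B [l [ul sl al cl]]]].
    by exists 0%N, [::]; split.
  have op : metric_open d (fun y => d (Sstar m) y < r).
    move=> x hx; exists (r - d (Sstar m) x); first by rewrite subr_gt0.
    move=> y hy; have := dtri (Sstar m) x y; lra.
  have c0 : d (Sstar m) (Sstar m) < r by rewrite (proj2 (deq _ _) erefl).
  have [n [Bn cn]] := hinf m hm _ op c0 B.
  exists n, (n :: l); split => //=.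
  - rewrite ul andbT; apply/negP => nl; have := allP al n nl.
    by case/andP => _ h; move: (leq_trans Bn h); rewrite ltnn.
  - by rewrite sl.
  - rewrite leqnn (leq_trans _ Bn) //=; apply/allP => j jl.
    case/andP: (allP al j jl) => -> h /=; apply: leq_trans h (ltnW Bn).
  - by move=> i; rewrite inE => /orP[/eqP->|/cl].
have fchoice : forall (P : nat -> nat -> Prop) n,
    (forall m, (m < n)%N -> exists N1, forall N, (N1 <= N)%N -> P m N) ->
    exists N1, forall N, (N1 <= N)%N -> forall m, (m < n)%N -> P m N.
  move=> P; elim=> [|n IH] H; first by exists 0%N.
  have [N1 h1] := IH (fun m hm => H m (ltnW hm)).
  have [N2 h2] := H n (ltnSn n).
  exists (maxn N1 N2) => N hN m; rewrite ltnS leq_eqVlt => /orP[/eqP->|hm].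
    by apply: h2; apply: leq_trans hN; rewrite leq_maxr.
  by apply: h1 => //; apply: leq_trans hN; rewrite leq_maxl.
have hsmall : forall r t, 0 < r -> (1 <= t)%N -> exists N1, forall N,
    (N1 <= N)%N -> (t <= N)%N -> RNt d S Sstar M sel N t < r.
  move=> r t r0 t1.
  have hper : forall m, (m < M.+1)%N -> exists N1, forall N, (N1 <= N)%N ->
      (1 <= m <= M)%N -> (t <= N)%N ->
      forall i, i \in sel m N t -> d (Sstar m) (S i) < r.
    move=> m _.
    case: (boolP (1 <= m <= M)%N) => hm; last by exists 0%N => N _ /negP.
    have [B [l [ul sl al cl]]] := hclose m r hm r0 t.
    exists B => N hN _ htN i ii.
    have al2 : all (fun i => (1 <= i <= N)%N) l.
      apply/allP => j jl; case/andP: (allP al j jl) => -> h /=; exact: leq_trans h hN.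
    have [j jl hj] := nn_cmp (hsel m N t hm (introT andP (conj t1 htN))) ul sl al2 _ ii.
    exact: le_lt_trans hj (cl j jl).
  have [N1 h1] := fchoice _ M.+1 hper.
  exists N1 => N hN htN; rewrite /RNt; apply: bigmax_lt => // m.
  rewrite mem_iota add1n => /andP[m1 m2].
  apply: bigmax_lt => // i ii; apply: (h1 N hN m) => //; lia.
have part1 : forall K : nat, exists N0 : nat, forall N, (N0 <= N)%N -> (K <= k N)%N.
  elim=> [|K [N0 IH]]; first by exists 0%N.
  set N0' := maxn N0 1.
  have hN0' : forall N, (N0' <= N)%N -> (N0 <= N)%N /\ (1 <= N)%N.
    by move=> N h; split; apply: leq_trans h; rewrite ?leq_maxl ?leq_maxr.
  case: (classic (exists N1, (N0' <= N1)%N /\ (K < k N1)%N)) => [[N1 [h1 h2]]|hno].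
    exists N1 => N hN; apply: leq_trans h2 (hkmono _ _ _ hN).
    by case: (hN0' _ h1).
  exfalso.
  have keq : forall N, (N0' <= N)%N -> k N = K.
    move=> N hN; case: (hN0' _ hN) => h1 h2; apply/eqP; rewrite eqn_leq IH // andbT.
    by rewrite leqNgt; apply/negP => h; apply: hno; exists N.
  have K1 : (1 <= K)%N.
    have := hkle N0' (proj2 (hN0' _ (leqnn _))); rewrite keq //; by case/andP.
  have [N1 h1] := hsmall (a K) K.+1 (apos K K1) isT.
  set N := maxn N1 N0'.
  have hN : (N0' <= N)%N by rewrite leq_maxr.
  have hNs : (N0' <= N.+1)%N by apply: leq_trans hN _.
  have := hstep N (proj2 (hN0' _ hN)); rewrite keq // keq //.
  have hlt : RNt d S Sstar M sel N.+1 K.+1 < a K.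
    apply: h1; first by apply: leq_trans (leq_maxl N1 N0') (leqnSn _).
    have := hkle N (proj2 (hN0' _ hN)); rewrite (keq N hN); lia.
  rewrite (ltW hlt) /=; lia.
split=> //.
have inv : forall N, (1 <= N)%N -> (2 <= k N)%N ->
    RNt d S Sstar M sel N (k N) <= a (k N).-1.
  elim=> // N IH _; case: N IH => [|N] IH; first by rewrite hk1.
  rewrite hstep //; case: ifP => [h _ //|_ h2].
  apply: le_trans (IH isT h2); apply: hmon => //.
  rewrite (leq_trans _ h2) //=; by case/andP: (hkle N.+1 isT).
move=> e e0; have [t0 ht0] := alim e e0.
have [N0 h0] := part1 t0.+2.
exists (maxn N0 1) => N hN.
have hN0 : (N0 <= N)%N by apply: leq_trans hN; rewrite leq_maxl.
have hN1 : (1 <= N)%N by apply: leq_trans hN; rewrite leq_maxr.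
have hk := h0 N hN0.
apply: le_lt_trans (inv N hN1 (leq_trans _ hk)) _ => //.
apply: ht0; rewrite -ltnS prednK //; exact: leq_trans hk.
Qed.
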